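(* Let $X$ be an infinite ultrahomogeneous chain with the order topology, $G=(\mathrm{Aut}(X),\tau_p)$, and $cX=c_mX/(\inf\sim\sup)$. Then neither $e_{c_mX}G$ nor $e_{cX}G$ is an sm-compactification of $G$.
   Context: Ultrahomogeneous chain: for all $x_1<\dots<x_n$, $y_1<\dots<y_n$ there is an order automorphism with $g(x_k)=y_k$. $\tau_p$: topology of pointwise convergence. $c_mX$: $X$ plus one point per gap (cut $(A,B)$, $A<B$, $A$ without max, $B$ without min, including $\inf$, $\sup$), order topology. $e_KG$ is the closure of $\{x\mapsto gx:g\in G\}$ in $K^K$ with product topology, a right topological monoid under composition. An sm-compactification of $G$ is a compactification $bG$ with continuous extended left action of $G$ which is a semitopological monoid (separately continuous multiplication) whose multiplication restricted to $G\times bG$ is the extended left action. *)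

(* Defs.v *)
From HB Require Import structures.
From mathcomp Require Import all_boot all_order all_algebra generic_quotient.
From mathcomp Require Import all_classical all_reals topology.
Unset Printing Implicit Defensive.
Import Order.TTheory.
Local Open Scope classical_set_scope.
Local Open Scope quotient_scope.

Definition order_aut {d} {X : orderType d} (g : X -> X) : Prop :=
  bijective g /\ {mono g : x y / (x <= y)%O}.

Definition ultrahomogeneous {d} (X : orderType d) : Prop :=
  forall (n : nat) (x y : 'I_n -> X),
    (forall i j : 'I_n, (i < j)%N -> (x i < x j)%O) ->
    (forall i j : 'I_n, (i < j)%N -> (y i < y j)%O) ->
    exists g : X -> X, order_aut g /\ forall k, g (x k) = y k.

Definition AutSet {d} (X : orderType d)
  : set {ptws order_topology X -> order_topology X} :=
  [set g | @order_aut d (order_topology X) g].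

Definition AutG {d} (X : orderType d) : topologicalType := set_type (AutSet X).

Section AutGroup.
Context {d} (X : orderType d).

Lemma order_aut_comp (g h : order_topology X -> order_topology X) :
  order_aut g -> order_aut h -> order_aut (g \o h).
Proof.
move=> [bg mg] [bh mh]; split; first exact: bij_comp.
by move=> x y /=; rewrite mg mh.
Qed.

Lemma order_aut_id : order_aut (@id (order_topology X)).
Proof. by split => //; exists id. Qed.

Definition Aut_mul (g h : AutG X) : AutG X :=
  exist _ (sval g \o sval h : {ptws order_topology X -> order_topology X})
    (mem_set (order_aut_comp _ _ (set_mem (svalP g)) (set_mem (svalP h)))).

Definition Aut_one : AutG X :=
  exist _ (id : {ptws order_topology X -> order_topology X})
    (mem_set order_aut_id).

End AutGroup.

(** A point of c_m X is represented by a lower part of a cut of X: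
    - the point x of X is represented by the closed ray ]-oo, x];
    - the gap (A, B) (A < B, A u B = X, A without max, B without min,
      A or B possibly empty: this includes inf = (set0, X) and
      sup = (X, set0)) is represented by A.
    The order of c_m X is inclusion of these lower parts. *)
Section Cm.
Context {d} (X : orderType d).

Definition downclosed (A : set X) : Prop :=
  forall x y : X, (y <= x)%O -> A x -> A y.

Definition no_max (A : set X) : Prop :=
  forall x, A x -> exists2 y, A y & (x < y)%O.

Definition no_min (B : set X) : Prop :=
  forall x, B x -> exists2 y, B y & (y < x)%O.

Definition is_gap (A : set X) : Prop :=
  [/\ downclosed A, no_max A & no_min (~` A)].

Definition cm_set : set (set X) :=
  [set A | (exists x : X, A = [set y | (y <= x)%O]) \/ is_gap A].

Definition cm_type := set_type cm_set.
HB.instance Definition _ := Choice.copy cm_type (set_type cm_set).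

Lemma cm_downclosed (a : cm_type) : downclosed (sval a).
Proof.
case: a => A /= /set_mem [[x ->]|[]//] u v vu /= ux.
exact: le_trans vu ux.
Qed.

Definition cm_le (a b : cm_type) : bool := `[< sval a `<=` sval b >].

Lemma cm_le_refl : reflexive cm_le.
Proof. by move=> a; apply/asboolP. Qed.

Lemma cm_le_anti : antisymmetric cm_le.
Proof.
move=> a b /andP[/asboolP ab /asboolP ba]; apply: val_inj => /=.
by apply/seteqP; split.
Qed.

Lemma cm_le_trans : transitive cm_le.
Proof.
move=> b a c /asboolP ab /asboolP bc; apply/asboolP.
exact: subset_trans ab bc.
Qed.

HB.instance Definition _ :=
  Order.Le_isPOrder.Build Order.default_display cm_type
    cm_le_refl cm_le_anti cm_le_trans.

Lemma cm_le_total : total (<=%O : rel cm_type).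
Proof.
move=> a b; rewrite /Order.le /=.
have [ab|nab] := pselect (sval a `<=` sval b).
  by apply/orP; left; apply/asboolP.
apply/orP; right; apply/asboolP => y by_.
move/existsNP: nab => [x /not_implyP [ax nbx]].
have [xy|yx] := leP x y.
  by exfalso; apply: nbx; exact: (cm_downclosed b _ _ xy by_).
exact: (cm_downclosed a _ _ (ltW yx) ax).
Qed.

HB.instance Definition _ :=
  Order.POrder_isTotal.Build Order.default_display cm_type cm_le_total.

Definition cmX := order_topology cm_type.

(** inf = (set0, X) and sup = (X, set0) are the points represented by
    set0 and setT; cX = c_m X / (inf ~ sup) *)
Definition inf_sup_rel (a b : cmX) : bool :=
  let f (c : cmX) : set X := if sval c == setT then set0 else sval c in
  (a == b) || (f a == f b) && (sval a \in [set set0; setT])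
                           && (sval b \in [set set0; setT]).

Lemma inf_sup_refl : reflexive inf_sup_rel.
Proof. by move=> a; rewrite /inf_sup_rel eqxx. Qed.

Lemma inf_sup_sym : symmetric inf_sup_rel.
Proof.
move=> a b; rewrite /inf_sup_rel eq_sym; congr (_ || _).
by rewrite [X in X && _ && _]eq_sym andbAC andbA.
Qed.

Lemma inf_sup_trans : transitive inf_sup_rel.
Proof.
move=> b a c; rewrite /inf_sup_rel.
case/orP=> [/eqP ->//|/andP[/andP[/eqP fab Ha] Hb] ].
case/orP=> [/eqP <-|/andP[/andP[/eqP fbc Hb'] Hc] ].
  by apply/orP; right; rewrite fab eqxx Ha Hb.
by apply/orP; right; rewrite fab fbc eqxx Ha Hc.
Qed.

Definition inf_sup_equiv : equiv_rel cmX :=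
  EquivRel inf_sup_rel inf_sup_refl inf_sup_sym inf_sup_trans.

Definition cX := quotient_topology {eq_quot inf_sup_equiv}.

Lemma image_cm (g : X -> X) (A : set X) :
  order_aut g -> cm_set A -> cm_set (g @` A).
Proof.
move=> [[h gh hg] mg].
have ltg : {mono g : x y / (x < y)%O} by move=> x y; rewrite !ltNge mg.
have inj : injective g := can_inj gh.
case=> [[x ->]|[dA nmA nmB]]; [left; exists (g x)|right; split].
- apply/seteqP; split => [t [y yx yt]|z zx] /=; first by subst t; rewrite mg.
  by exists (h z) => //=; rewrite -mg hg.
- move=> t z zx [y Ay yt]; subst t; exists (h z); last by rewrite hg.
  by apply: (dA y); rewrite // -mg hg.
- move=> t [x Ax xt]; subst t; have [y Ay xy] := nmA x Ax.
  by exists (g y); [exists y|rewrite ltg].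
- move=> z nz; have nhz : ~ A (h z) by move=> Ahz; apply: nz; exists (h z).
  have [y nAy yz] := nmB _ nhz; exists (g y).
    by move=> [w Aw /inj wy]; apply: nAy; rewrite -wy.
  by rewrite -(hg z) ltg.
Qed.

Definition act_m (g : AutG X) (a : cmX) : cmX :=
  exist _ (sval g @` sval a)
    (mem_set (image_cm _ _ (set_mem (svalP g)) (set_mem (svalP a)))).

Definition act_c (g : AutG X) (q : cX) : cX :=
  \pi_cX (act_m g (repr q)).

End Cm.

Definition ellis {G K : topologicalType} (act : G -> K -> K)
  : set {ptws K -> K} :=
  closure (range (fun g : G => (act g : {ptws K -> K}))).

(** A compactification bG of G, given as a subspace B of an ambient
    topological space T, together with a map nu : G -> B:
    B is compact Hausdorff, nu is continuous with dense image. *)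
Definition compactification_in {G T : topologicalType} (B : set T)
    (nu : G -> T) : Prop :=
  [/\ compact B,
      (forall p q, B p -> B q -> p <> q ->
         exists U V : set T, [/\ open U, open V, U p, V q &
                                 U `&` V `&` B = set0]),
      (forall g, B (nu g)),
      continuous nu &
      B `<=` closure (range nu)].

Definition sm_compactification (G : topologicalType)
    (gmul : G -> G -> G) (gone : G)
    (T : topologicalType) (B : set T) (nu : G -> T)
    (act : G -> T -> T) (mul : T -> T -> T) : Prop :=
  [/\ compactification_in B nu,
      [/\ (forall g b, B b -> B (act g b)),
          {within [set: G] `*` B, continuous (fun x : G * T => act x.1 x.2)},
          (forall b, B b -> act gone b = b),
          (forall g h b, B b -> act (gmul g h) b = act g (act h b)) &
          (forall g h, act g (nu h) = nu (gmul g h))],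
      [/\ (forall a b, B a -> B b -> B (mul a b)),
          (exists2 u, B u & forall a, B a -> mul u a = a /\ mul a u = a),
          (forall a b c, B a -> B b -> B c -> mul a (mul b c) = mul (mul a b) c) &
          (forall a, B a -> {within B, continuous (mul a)} /\
                            {within B, continuous (fun b => mul b a)})] &
      (forall g b, B b -> mul (nu g) b = act g b)].

Definition ellis_is_sm {G : topologicalType} (gmul : G -> G -> G) (gone : G)
    {K : topologicalType} (act : G -> K -> K) : Prop :=
  @sm_compactification G gmul gone {ptws K -> K} (ellis act)
    (fun g => (act g : {ptws K -> K}))
    (fun g (p : {ptws K -> K}) => (act g \o p : {ptws K -> K}))
    (fun p q : {ptws K -> K} => (p \o q : {ptws K -> K})).

(* Main.v *)
Require Import Defs.
From HB Require Import structures.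
From mathcomp Require Import all_boot all_order all_algebra generic_quotient.
From mathcomp Require Import all_classical all_reals topology.
Import Order.TTheory.
Local Open Scope classical_set_scope.

Lemma abstract_not_sm (G K : topologicalType) gmul gone (act : G -> K -> K)
  (p b : K -> K) (k : K) (F : set_system G) (W : set K) :
  ProperFilter F ->
  ellis act (p : {ptws K -> K}) ->
  (fun g => (act g : {ptws K -> K})) @ F --> (b : {ptws K -> K}) ->
  open W -> W (p (b k)) ->
  F (fun g => ~ W (p (act g k))) ->
  ~ ellis_is_sm gmul gone act.
Proof.
move=> PF Bp cvgb oW Wpb Fn [_ _ [_ _ _ Hc] _].
have Bb : ellis act (b : {ptws K -> K}).
  rewrite /ellis closureEcvg; exists ((fun g => (act g : {ptws K -> K})) @ F).
    exact: fmap_proper_filter.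
  split => // S rS; change (F (fun g => S (act g))); apply: filterE => g; apply: rS; by exists g.
have [+ _] := Hc _ Bp.
move/subspace_continuousP => /(_ _ Bb) cp.
have cw : (fun g => (act g : {ptws K -> K})) @ F --> within (ellis act) (nbhs (b : {ptws K -> K})).
  move=> U BU; have := cvgb _ BU; change (F (fun g => ellis act (act g) -> U (act g)) -> F (fun g => U (act g))).
  apply: filterS => g H; apply: H.
  rewrite /ellis; apply: subset_closure; by exists g.
have c2 := cvg_trans (cvg_app _ cw) cp.
have c2' : {ptws, ((fun x : {ptws K -> K} => (p \o x : {ptws K -> K})) @ ((fun g => (act g : {ptws K -> K})) @ F)) --> (p \o b : {ptws K -> K})} := c2.
have c3 : (fun g => p (act g k)) @ F --> p (b k).
  exact: (cvg_trans (cvg_app (@proj K (fun=> K) k) c2') (@proj_continuous K (fun=> K) k _)).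
have : F (fun g => W (p (act g k))).
  apply: (c3 W); apply: open_nbhs_nbhs; split => //.
move=> FW; have := filterI FW Fn; rewrite (_ : _ `&` _ = set0).
  by move=> H; apply: (@filter_not_empty _ F); apply: H.
by apply/seteqP; split => // g [].
Qed.
Lemma ptws_cvg_gen {U : Type} {V : topologicalType} (F : set_system (U -> V))
  (f : U -> V) : Filter F ->
  (forall t, (fun g => g t) @ F --> f t) -> F --> (f : {ptws U -> V}).
Proof.
move=> FF H; apply/cvg_sup => i; apply/cvg_image.
  by apply/seteqP; split => // v _; exists (fun=> v).
move=> W /H FW; exists ((fun g => g i) @^-1` W) => //.
by apply/seteqP; split => [v [g Wg <-]//|v Wv]; exists (fun=> v).
Qed.
Local Open Scope order_scope.
Local Open Scope quotient_scope.
Section Main.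
Context {d : Order.disp_t} (X : orderType d).
Hypothesis infX : infinite_set [set: X].
Hypothesis uh : ultrahomogeneous X.

Lemma uh_seq (x0 : X) (s t : seq X) : sorted <%O s -> sorted <%O t ->
  size s = size t -> exists g : X -> X, order_aut g /\
  forall i, (i < size s)%N -> g (nth x0 s i) = nth x0 t i.
Proof.
move=> ss st e.
have [||g [ag Hg]] := uh (size s) (fun i => nth x0 s i) (fun i => nth x0 t i).
- move=> i j ij; apply: (sorted_ltn_nth lt_trans) => //; by rewrite inE.
- move=> i j ij; apply: (sorted_ltn_nth lt_trans) => //; by rewrite inE -e.
exists g; split => // i hi; exact: (Hg (Ordinal hi)).
Qed.

Lemma aut_lt (g : X -> X) : order_aut g -> {mono g : x y / x < y}.
Proof. by move=> [_ mg] x y; rewrite !ltNge mg. Qed.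

Lemma uh1 (x y : X) : exists g : X -> X, order_aut g /\ g x = y.
Proof.
have [g [ag Hg]] := uh_seq x [:: x] [:: y] erefl erefl erefl.
by exists g; split => //; exact: (Hg 0%N).
Qed.

Lemma uh2 (x1 x2 y1 y2 : X) : x1 < x2 -> y1 < y2 ->
  exists g : X -> X, order_aut g /\ g x1 = y1 /\ g x2 = y2.
Proof.
move=> hx hy.
have [g [ag Hg]] := uh_seq x1 [:: x1; x2] [:: y1; y2] ltac:(by rewrite /= hx)
  ltac:(by rewrite /= hy) erefl.
by exists g; split => //; split; [exact: (Hg 0%N)|exact: (Hg 1%N)].
Qed.

Lemma uh3 (x1 x2 x3 y1 y2 y3 : X) : x1 < x2 -> x2 < x3 -> y1 < y2 -> y2 < y3 ->
  exists g : X -> X, order_aut g /\ [/\ g x1 = y1, g x2 = y2 & g x3 = y3].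
Proof.
move=> h1 h2 h3 h4.
have [g [ag Hg]] := uh_seq x1 [:: x1; x2; x3] [:: y1; y2; y3]
  ltac:(by rewrite /= h1 h2) ltac:(by rewrite /= h3 h4) erefl.
by exists g; split => //; split; [exact: (Hg 0%N)|exact: (Hg 1%N)|exact: (Hg 2%N)].
Qed.

Lemma two_points : exists x y : X, x != y.
Proof.
apply: contrapT => H; apply: infX.
case: (pselect (exists x : X, True)) => [[x _]|nx].
  rewrite (_ : [set: X] = [set x]); first exact: finite_set1.
  apply/seteqP; split => // y _ /=; apply: contrapT => nyx; apply: H.
  by exists y, x; apply/eqP.
rewrite (_ : [set: X] = set0) //; apply/seteqP; split => // y _; apply: nx; by exists y.
Qed.

Lemma no_max_X (x : X) : exists y, x < y.
Proof.
apply: contrapT => H.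
have mx : forall y, y <= x.
  move=> y; rewrite leNgt; apply/negP => xy; apply: H; by exists y.
have [a [b ab]] := two_points.
have [y yx] : exists y, y < x.
  case: (ltgtP a x) => [ax|xa|ax]; first by exists a.
  - by move: (mx a); rewrite leNgt xa.
  - case: (ltgtP b x) => [bx|xb|bx]; first by exists b.
    + by move: (mx b); rewrite leNgt xb.
    + by move: ab; rewrite ax bx eqxx.
have [g [[[h gh hg] mg] gx]] := uh1 x y.
have := mx (h x); rewrite -mg hg gx => xy.
by move: (lt_le_trans yx xy); rewrite ltxx.
Qed.

Lemma no_min_X (x : X) : exists y, y < x.
Proof.
have [z xz] := no_max_X x.
have [g [ag gz]] := uh1 z x.
by exists (g x); rewrite -{2}gz (aut_lt _ ag).
Qed.

Lemma dense_X (x y : X) : x < y -> exists2 z, x < z & z < y.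
Proof.
move=> xy; have [w yw] := no_max_X y.
have [g [ag [gx gw]]] := uh2 _ _ _ _ (lt_trans xy yw) xy.
exists (g y); first by rewrite -gx (aut_lt _ ag).
by rewrite -{2}gw (aut_lt _ ag).
Qed.


Definition ptS (x : X) : set X := [set y | y <= x].
Definition pt (x : X) : cmX X :=
  exist _ (ptS x) (mem_set (or_introl (ex_intro _ x erefl))).

Lemma gap0 : is_gap X set0.
Proof.
split; [by move=> x y _ []|by move=> x []|move=> x _].
by have [y yx] := no_min_X x; exists y.
Qed.

Lemma gapT : is_gap X setT.
Proof.
split; [by []|move=> x _|by move=> x H; exfalso; apply: H].
by have [y yx] := no_max_X x; exists y.
Qed.

Definition infm : cmX X := exist _ set0 (mem_set (or_intror gap0)).
Definition supm : cmX X := exist _ setT (mem_set (or_intror gapT)).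

Lemma cm_leP (a b : cmX X) : a <= b <-> sval a `<=` sval b.
Proof. by split => /asboolP. Qed.

Lemma pt_le x (a : cmX X) : pt x <= a <-> sval a x.
Proof.
rewrite cm_leP; split => [H|ax y /= yx]; first by apply: H; exact: lexx.
exact: (cm_downclosed X a _ _ yx ax).
Qed.

Lemma lt_pt (a : cmX X) x : a < pt x <-> ~ sval a x.
Proof. by rewrite ltNge; split => [/negP H ax|H]; [apply: H; apply/pt_le|apply/negP => /pt_le]. Qed.

Lemma pt_lt x (a : cmX X) : pt x < a <-> exists2 w, sval a w & x < w.
Proof.
rewrite ltNge; split => [/negP H|[w aw xw]].
  apply: contrapT => nH; apply: H; apply/cm_leP => y ay; change (y <= x).
  rewrite leNgt; apply/negP => xy; apply: nH; by exists y.
apply/negP => /cm_leP /(_ w aw) H; have : w <= x by exact: H.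
by rewrite leNgt xw.
Qed.

Lemma pt_le_pt x y : pt x <= pt y <-> x <= y.
Proof. by rewrite pt_le. Qed.

Lemma pt_lt_pt x y : pt x < pt y <-> x < y.
Proof.
rewrite lt_pt; split => [H|xy H].
  by rewrite ltNge; apply/negP => H'; apply: H; exact: H'.
have : y <= x by exact: H.
by rewrite leNgt xy.
Qed.


Lemma left_approx (a : cmX X) x : a < pt x -> exists2 s, s < x & a < pt s.
Proof.
move/lt_pt; case: a => A HA /=; case: (set_mem HA) => [[u eA]|[dA nmA nmB]] nx.
  have ux : u < x by rewrite ltNge; apply/negP => H; apply: nx; rewrite eA.
  have [z uz zx] := dense_X _ _ ux; exists z => //; apply/lt_pt => /=; rewrite eA => zu.
  have : z <= u by exact: zu.
  by rewrite leNgt uz.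
have [y ny yx] := nmB x nx; exists y => //; exact/lt_pt.
Qed.

Lemma right_approx (b : cmX X) x : pt x < b -> exists2 t, x < t & pt t < b.
Proof.
move/pt_lt => [w]; case: b => A HA /=; case: (set_mem HA) => [[u eA]|[dA nmA nmB]] bw xw.
  have wu : w <= u by move: bw; rewrite eA.
  have [t xt tu] := dense_X _ _ (lt_le_trans xw wu); exists t => //.
  by apply/pt_lt; exists u => //=; rewrite eA /=.
have [w' Aw' ww'] := nmA w bw; exists w => //; apply/pt_lt; by exists w'.
Qed.

Lemma inf_le (a : cmX X) : infm <= a.
Proof. by apply/cm_leP. Qed.

Lemma le_sup (a : cmX X) : a <= supm.
Proof. by apply/cm_leP. Qed.

Lemma inf_lt_ex (a : cmX X) : infm < a -> exists y, sval a y.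
Proof.
rewrite ltNge => /negP H; apply: contrapT => nH; apply: H; apply/cm_leP => y ay.
by apply: nH; exists y.
Qed.

Lemma lt_sup_ex (a : cmX X) : a < supm -> exists2 y, a < pt y & True.
Proof.
rewrite ltNge => /negP H; apply: contrapT => nH; apply: H; apply/cm_leP => y _.
apply: contrapT => ay; apply: nH; exists y => //; exact/lt_pt.
Qed.

Lemma act_pt (g : AutG X) x : act_m X g (pt x) = pt (sval g x).
Proof.
have [[h gh hg] mg] : order_aut (sval g) := set_mem (svalP g).
apply: val_inj => /=; apply/seteqP; split => [t [y yx <-]|z zx] /=.
  by rewrite /ptS /= mg.
by exists (h z) => //; rewrite /ptS /= -mg hg.
Qed.

Lemma act_inf (g : AutG X) : act_m X g infm = infm.
Proof. by apply: val_inj => /=; rewrite image_set0. Qed.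

Lemma act_sup (g : AutG X) : act_m X g supm = supm.
Proof.
have [[h gh hg] mg] : order_aut (sval g) := set_mem (svalP g).
apply: val_inj => /=; apply/seteqP; split => // z _; by exists (h z).
Qed.

Lemma act_mono (g : AutG X) (a b : cmX X) : a <= b -> act_m X g a <= act_m X g b.
Proof. by move/cm_leP => ab; apply/cm_leP => /=; apply: image_subset. Qed.


Lemma nbhs_pt x (U : set (cmX X)) : nbhs (pt x) U ->
  exists s t, [/\ s < x, x < t & forall a, pt s <= a -> a <= pt t -> U a].
Proof.
rewrite itv_nbhsE => -[i [oi xi] iU].
move: oi xi iU; case: i => l r; case: l => [[] lb|[]]; case: r => [[] rb|[]] //=.
all: rewrite ?in_itv /= ?andbT => oi xi iU.
- case/andP: xi => l1 r1.
  have [s sx ls] := left_approx _ _ l1; have [t xt tr] := right_approx _ _ r1.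
  exists s, t; split => // a sa aT; apply: iU; rewrite /= in_itv /=.
  by rewrite (lt_le_trans ls sa) (le_lt_trans aT tr).
- have [s sx ls] := left_approx _ _ xi; have [t xt] := no_max_X x.
  exists s, t; split => // a sa aT; apply: iU; rewrite /= in_itv /=.
  by rewrite (lt_le_trans ls sa).
- have [s sx] := no_min_X x; have [t xt tr] := right_approx _ _ xi.
  exists s, t; split => // a sa aT; apply: iU; rewrite /= in_itv /=.
  by rewrite (le_lt_trans aT tr).
- have [s sx] := no_min_X x; have [t xt] := no_max_X x.
  exists s, t; split => // a sa aT; apply: iU; rewrite /= in_itv /=. by [].
Qed.

Lemma nbhs_inf (U : set (cmX X)) : nbhs infm U ->
  exists s, forall a, a <= pt s -> U a.
Proof.
rewrite itv_nbhsE => -[i [oi xi] iU].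
move: oi xi iU; case: i => l r; case: l => [[] lb|[]]; case: r => [[] rb|[]] //=.
all: rewrite ?in_itv /= ?andbT => oi xi iU.
- by case/andP: xi => /(le_lt_trans (inf_le lb)); rewrite ltxx.
- by move: (le_lt_trans (inf_le lb) xi); rewrite ltxx.
- have [y ry] := inf_lt_ex _ xi; have [s sy] := no_min_X y.
  exists s => a aS; apply: iU; rewrite /= in_itv /=; apply: (le_lt_trans aS).
  by apply/pt_lt; exists y.
- have [y [_ _]] := two_points; exists y => a _; apply: iU; by rewrite /= in_itv.
Qed.


Lemma aut_mono (g : AutG X) : {mono sval g : x y / x <= y}.
Proof. by have [_ mg] : order_aut (sval g) := set_mem (svalP g). Qed.

Lemma aut_ltm (g : AutG X) : {mono sval g : x y / x < y}.
Proof. by move=> x y; rewrite !ltNge aut_mono. Qed.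

Definition mkAut (g : X -> X) (ag : order_aut g) : AutG X :=
  exist _ (g : {ptws order_topology X -> order_topology X}) (mem_set ag).

Lemma pt_neq_inf x : pt x <> infm.
Proof. move=> /(congr1 sval) /= /seteqP [/(_ x) H _]; apply: H; exact: lexx. Qed.

Lemma pt_neq_sup x : pt x <> supm.
Proof.
move=> /(congr1 sval) /= /seteqP [_ /(_ _ I) H]; have [y xy] := no_max_X x.
have : y <= x by exact: (H y). by rewrite leNgt xy.
Qed.

Variable x0 : X.

Definition p_m (a : cmX X) : cmX X :=
  if a <= pt x0 then infm else if a == supm then supm else pt x0.

Definition b_m (a : cmX X) : cmX X :=
  if (a == infm) || (a == supm) then a else pt x0.

Definition Db (i : X * X * X) : Prop :=
  let: (t, y0, y1) := i in [/\ x0 < t, y0 < x0 & x0 < y1].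
Definition Eb (i : X * X * X) : set (AutG X) :=
  let: (t, y0, y1) := i in [set g | x0 < sval g y0 /\ sval g y1 <= t].

Definition Fb := filter_from Db Eb.

Lemma Db_ex : exists i, Db i.
Proof.
have [t xt] := no_max_X x0; have [y0 yx] := no_min_X x0.
by exists (t, y0, t); split.
Qed.

Lemma Fb_proper : ProperFilter Fb.
Proof.
apply: filter_from_proper.
  apply: filter_from_filter; first exact: Db_ex.
  move=> [[t y0] y1] [[t' y0'] y1'] [h1 h2 h3] [h1' h2' h3'].
  exists (Order.min t t', Order.min y0 y0', Order.max y1 y1').
    by split; rewrite ?lt_min ?gt_min ?lt_max ?h1 ?h2 ?h3 ?h1'.
  move=> g [g1]; rewrite le_min => /andP [g2 g3]; split; split.
  - by apply: (lt_le_trans g1); rewrite aut_mono ge_min lexx.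
  - by apply: le_trans g2; rewrite aut_mono le_max lexx.
  - by apply: (lt_le_trans g1); rewrite aut_mono ge_min lexx orbT.
  - by apply: le_trans g3; rewrite aut_mono le_max lexx orbT.
move=> [[t y0] y1] [h1 h2 h3].
have [u xu ut] := dense_X _ _ h1.
have [g [ag [g0 g1]]] := uh2 _ _ _ _ (lt_trans h2 h3) ut.
exists (mkAut g ag) => /=; split; first by rewrite g0.
by rewrite g1.
Qed.


Local Instance Fb_properI : ProperFilter Fb := Fb_proper.

Lemma neq_inf_lt (a : cmX X) : a != infm -> infm < a.
Proof. by move=> H; rewrite lt_neqAle inf_le andbT eq_sym. Qed.

Lemma neq_sup_lt (a : cmX X) : a != supm -> a < supm.
Proof. by move=> H; rewrite lt_neqAle le_sup andbT. Qed.

Lemma cvg_b (a : cmX X) : (fun g => act_m X g a) @ Fb --> b_m a.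
Proof.
rewrite /b_m; have [->|ninf] := eqVneq a infm.
  move=> U /= Ui; change (Fb (fun g => U (act_m X g infm))).
  apply: filterE => g /=; rewrite act_inf; exact: nbhs_singleton.
have [->|nsup] := eqVneq a supm.
  rewrite orbT => U /= Ui; change (Fb (fun g => U (act_m X g supm))).
  apply: filterE => g /=; rewrite act_sup; exact: nbhs_singleton.
rewrite /=.
move=> U /nbhs_pt [s [t [sx xt HU]]].
have [y ay] := inf_lt_ex _ (neq_inf_lt _ ninf).
have [y' ay' _] := lt_sup_ex _ (neq_sup_lt _ nsup).
have [s0 s0x] := no_min_X x0; have [t0 xt0] := no_max_X x0.
exists (t, Order.min y s0, Order.max y' t0).
  by split; rewrite ?gt_min ?lt_max ?xt ?s0x ?xt0 ?orbT.
move=> g [g1 g2]; apply: HU.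
  apply: (le_trans (y := pt (sval g (Order.min y s0)))).
    by apply/pt_le_pt; apply: ltW; exact: (lt_trans sx g1).
  rewrite -act_pt; apply: act_mono; apply/pt_le.
  by apply: (cm_downclosed X a _ _ _ ay); rewrite ge_min lexx.
apply: (le_trans (y := pt (sval g (Order.max y' t0)))); last exact/pt_le_pt.
rewrite -act_pt; apply: act_mono; apply: ltW; apply: (lt_le_trans ay').
by apply/pt_le_pt; rewrite le_max lexx.
Qed.


Definition Dp (i : X * X * X * X * X) : Prop :=
  let: (s, y, y1, u, v) := i in [/\ x0 < y, y < y1, u < x0 & x0 < v].
Definition Ep (i : X * X * X * X * X) : set (AutG X) :=
  let: (s, y, y1, u, v) := i in
  [set g | [/\ sval g x0 <= s, u <= sval g y & sval g y1 <= v]].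

Definition Fp := filter_from Dp Ep.

Lemma Dp_ex (s : X) : exists y y1 u v, Dp (s, y, y1, u, v).
Proof.
have [y xy] := no_max_X x0; have [y1 yy1] := no_max_X y.
have [u ux] := no_min_X x0.
by exists y, y1, u, y; split.
Qed.

Lemma Fp_proper : ProperFilter Fp.
Proof.
apply: filter_from_proper.
  apply: filter_from_filter.
    have [y [y1 [u [v H]]]] := Dp_ex x0; by exists (x0, y, y1, u, v).
  move=> [[[[s y] y1] u] v] [[[[s' y'] y1'] u'] v'] [h1 h2 h3 h4] [h1' h2' h3' h4'].
  exists (Order.min s s', Order.min y y', Order.max y1 y1', Order.max u u',
          Order.min v v').
    split; rewrite ?lt_min ?gt_max ?h1 ?h1' ?h3 ?h3' ?h4 ?h4' //.
    by rewrite gt_min lt_max h2.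
  move=> g [];  rewrite le_min ge_max le_min => /andP [g1 g1'] /andP [g2 g2'] /andP [g3 g3'].
  split; split => //.
  - by apply: le_trans g2 _; rewrite aut_mono ge_min lexx.
  - by apply: le_trans _ g3; rewrite aut_mono le_max lexx.
  - by apply: le_trans g2' _; rewrite aut_mono ge_min lexx orbT.
  - by apply: le_trans _ g3'; rewrite aut_mono le_max lexx orbT.
move=> [[[[s y] y1] u] v] [h1 h2 h3 h4].
have [s' ss'] := no_min_X (Order.min s u).
move: ss'; rewrite lt_min => /andP [ss' su].
have [g [ag [g0 g1 g2]]] := uh3 _ _ _ _ _ _ h1 h2 su (lt_trans h3 h4).
exists (mkAut g ag) => /=; split => /=; rewrite ?g0 ?g1 ?g2 //.
exact: ltW.
Qed.

Local Instance Fp_properI : ProperFilter Fp := Fp_proper.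

Lemma cvg_p (a : cmX X) : (fun g => act_m X g a) @ Fp --> p_m a.
Proof.
rewrite /p_m; case: (boolP (a <= pt x0)) => ha.
  move=> U /nbhs_inf [s HU].
  have [y [y1 [u [v H]]]] := Dp_ex s; exists (s, y, y1, u, v) => //.
  move=> g [g1 _ _]; apply: HU; apply: le_trans (act_mono g _ _ ha) _.
  by rewrite act_pt; apply/pt_le_pt.
have [->|nsup] := eqVneq a supm.
  move=> U /= Ui; change (Fp (fun g => U (act_m X g supm))).
  apply: filterE => g /=; rewrite act_sup; exact: nbhs_singleton.
rewrite -ltNge in ha; have [w aw xw] := (pt_lt _ _).1 ha.
have [y' ay' _] := lt_sup_ex _ (neq_sup_lt _ nsup).
move=> U /nbhs_pt [u [v [ux xv HU]]].
have wy' : w < y'.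
  by apply/pt_lt_pt; apply: le_lt_trans ay'; apply/pt_le.
exists (x0, w, y', u, v) => //.
move=> g [_ g1 g2]; apply: HU.
  apply: (le_trans (y := pt (sval g w))); first exact/pt_le_pt.
  by rewrite -act_pt; apply: act_mono; apply/pt_le.
apply: (le_trans (y := pt (sval g y'))); last exact/pt_le_pt.
by rewrite -act_pt; apply: act_mono; apply: ltW.
Qed.


Lemma cvg_ellis {G K : topologicalType} (act : G -> K -> K) (F : set_system G)
  (f : K -> K) : ProperFilter F ->
  (fun g => (act g : {ptws K -> K})) @ F --> (f : {ptws K -> K}) ->
  ellis act (f : {ptws K -> K}).
Proof.
move=> PF cf; rewrite /ellis closureEcvg; exists ((fun g => (act g : {ptws K -> K})) @ F).
  exact: fmap_proper_filter.
split => // S rS; change (F (fun g => S (act g))); apply: filterE => g; apply: rS; by exists g.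
Qed.

Lemma not_sm_m : ~ ellis_is_sm (@Aut_mul d X) (Aut_one X) (@act_m d X).
Proof.
have [w wx] := no_min_X x0.
apply: (@abstract_not_sm _ _ _ _ _ p_m b_m (pt x0) Fb `]-oo, pt w[).
- apply: (cvg_ellis _ _ _ Fp_proper); apply: ptws_cvg_gen => a; exact: cvg_p.
- apply: ptws_cvg_gen => a; exact: cvg_b.
- exact: lray_open.
- rewrite /b_m.
  have [e|n1] := eqVneq (pt x0) infm; first by case: (pt_neq_inf x0).
  have [e|n2] := eqVneq (pt x0) supm; first by case: (pt_neq_sup x0).
  rewrite /= /p_m lexx /= in_itv /=; apply/lt_pt => /= [[]].
- have [[[t y0] y1] H] := Db_ex; exists (t, y0, y1) => // g [g1 g2].
  rewrite act_pt /p_m.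
  have gx : x0 < sval g x0.
    apply: (lt_le_trans g1); rewrite aut_mono; case: H => _ h _; exact: ltW.
  have -> : (pt (sval g x0) <= pt x0) = false.
    by apply/negP => /pt_le_pt; rewrite leNgt gx.
  have [e|n] := eqVneq (pt (sval g x0)) supm; first by case: (pt_neq_sup (sval g x0)).
  by rewrite /= in_itv /=; move/pt_lt_pt; rewrite ltNge (ltW wx).
Qed.


Lemma pi_rel (a b : cmX X) : \pi_(cX X) a = \pi_(cX X) b -> inf_sup_rel X a b.
Proof.
move=> e; have := eqmodE (inf_sup_equiv X) a b.
by rewrite /= e eqxx => <-.
Qed.

Lemma rel_cases (a b : cmX X) : inf_sup_rel X a b -> a = b \/ (a = infm \/ a = supm).
Proof.
rewrite /inf_sup_rel; case/orP => [/eqP -> |/andP [/andP [_ Ha] _]]; first by left.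
right; move: Ha; rewrite inE => -[] H; [left|right]; exact: val_inj.
Qed.

Lemma pi_pt_eq x (c : cmX X) : \pi_(cX X) c = \pi_(cX X) (pt x) -> c = pt x.
Proof.
move=> e; case: (rel_cases _ _ (pi_rel _ _ (esym e))) => [//|[]] e'.
  by case: (pt_neq_inf x).
by case: (pt_neq_sup x).
Qed.

Lemma repr_pi_pt x : repr (\pi_(cX X) (pt x)) = pt x.
Proof. by apply: pi_pt_eq; rewrite reprK. Qed.


Definition p_c (q : cX X) : cX X := \pi_(cX X) (p_m (repr q)).
Definition b_c (q : cX X) : cX X := \pi_(cX X) (b_m (repr q)).

Lemma not_sm_c : ~ ellis_is_sm (@Aut_mul d X) (Aut_one X) (@act_c d X).
Proof.
have [w wx] := no_min_X x0; have [w' xw] := no_max_X x0.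
pose cond (c : cmX X) := c < pt w \/ pt w' < c.
pose Wc := [set q : cX X | exists2 c, q = \pi_(cX X) c & cond c].
have condinf : cond infm by left; apply/lt_pt => -[].
have condsup : cond supm by right; apply/pt_lt; have [y wy] := no_max_X w'; by exists y.
have ncx : ~ cond (pt x0).
  by case => /pt_lt_pt; rewrite ltNge ?(ltW wx) ?(ltW xw).
have nWc : ~ Wc (\pi_(cX X) (pt x0)).
  by move=> [c /esym/pi_pt_eq ->].
apply: (@abstract_not_sm _ _ _ _ _ p_c b_c (\pi_(cX X) (pt x0)) Fb Wc).
- apply: (cvg_ellis _ _ _ Fp_proper); apply: ptws_cvg_gen => q.
  change ((fun g => \pi_(cX X) (act_m X g (repr q))) @ Fp --> \pi_(cX X) (p_m (repr q))).
  exact: (cvg_trans (cvg_app (\pi_(cX X)) (cvg_p (repr q))) (@pi_continuous _ _ _)).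
- apply: ptws_cvg_gen => q.
  change ((fun g => \pi_(cX X) (act_m X g (repr q))) @ Fb --> \pi_(cX X) (b_m (repr q))).
  exact: (cvg_trans (cvg_app (\pi_(cX X)) (cvg_b (repr q))) (@pi_continuous _ _ _)).
- rewrite /open /= /quotient_open.
  have -> : \pi_(cX X) @^-1` Wc = setU `]-oo, pt w[%classic `]pt w', +oo[%classic.
    apply/seteqP; split => c.
      move=> [c' /pi_rel /rel_cases [<-|[] ->]] cc'.
      + by case: cc' => H; [left|right]; rewrite /= in_itv /= ?H.
      + by left; rewrite /= in_itv /=; apply/lt_pt => -[].
      + by right; rewrite /= in_itv /= andbT; apply: neq_sup_lt; apply/eqP; exact: pt_neq_sup.
    by case => /=; rewrite in_itv /= ?andbT => H; exists c => //; [left|right].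
  by apply: openU; [exact: lray_open|exact: rray_open].
- rewrite /b_c repr_pi_pt /b_m.
  have [e|n1] := eqVneq (pt x0) infm; first by case: (pt_neq_inf x0).
  have [e|n2] := eqVneq (pt x0) supm; first by case: (pt_neq_sup x0).
  rewrite /= /p_c repr_pi_pt /p_m lexx; by exists infm.
- have [[[t y0] y1] H] := Db_ex; exists (t, y0, y1) => // g [g1 g2].
  rewrite /act_c repr_pi_pt act_pt /p_c repr_pi_pt /p_m.
  have gx : x0 < sval g x0.
    apply: (lt_le_trans g1); rewrite aut_mono; case: H => _ h _; exact: ltW.
  have -> : (pt (sval g x0) <= pt x0) = false.
    by apply/negP => /pt_le_pt; rewrite leNgt gx.
  have [e|n] := eqVneq (pt (sval g x0)) supm; first by case: (pt_neq_sup (sval g x0)).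
  exact: nWc.
Qed.

End Main.

Local Close Scope quotient_scope.
Local Close Scope order_scope.

Theorem mainTheorem15 (d : Order.disp_t) (X : orderType d) :
  infinite_set [set: X] -> ultrahomogeneous X ->
  ~ ellis_is_sm (@Aut_mul d X) (Aut_one X) (@act_m d X) /\
  ~ ellis_is_sm (@Aut_mul d X) (Aut_one X) (@act_c d X).
Proof.
move=> infX uh; have [x0 _] := two_points X infX.
by split; [exact: (not_sm_m X infX uh x0)|exact: (not_sm_c X infX uh x0)].
Qed.
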